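(* Let $\pi$ be a probability measure on $\mathcal{B}_n=\{0,1\}^n$ and $L$ the generator of a $\pi$-reversible flip-swap random walk on $\mathcal{B}_n$ which is $R$-stable for some $R\ge0$. Then for any nonempty $A\subset\mathcal{B}_n$ and every $x\in\mathrm{supp}\,\pi$, \[ \Gamma_+\big(d_T^2(\cdot,A)\big)(x)\le8R\rho(L)\,d_T^2(x,A). \] Moreover, for all $x,y\in\mathcal{B}_n$ and any nonempty $A\subset\mathcal{B}_n$, $d_T^2(x,A)-d_T^2(y,A)\le d_H(x,y)$.
   Context: A generator on $\mathcal{B}_n$ is a real matrix $L=(L(x,y))$ with $L(x,y)\ge0$ for $x\ne y$ and zero row sums; $\pi$-reversible: $\pi(x)L(x,y)=\pi(y)L(y,x)$. With $(Lg)(x)=\sum_yL(x,y)g(y)$, $\mathcal{E}(f,g)=-\sum_x\pi(x)f(x)(Lg)(x)$, $\mathrm{Ent}_\pi(f)=\pi(f\log f)-\pi(f)\log\pi(f)$, $\rho(L)$ is the largest constant with $\rho(L)\mathrm{Ent}_\pi(f)\le\mathcal{E}(f,\log f)$ for all non-constant $f\ge0$. Flip-swap: $L(x,y)>0$, $x\ne y$, implies $y$ differs from $x$ by flipping one coordinate or swapping two unequal coordinates. $R$-stable: $\rho(L)>0$ and $\max_{x\in\mathrm{supp}\,\pi,\,i\in[n]}\sum_{y:y_i\ne x_i}L(x,y)\le R\rho(L)$. $\Gamma_+(g)(x)=\sum_y(g(x)-g(y))_+^2L(x,y)$. $d_H(x,y)=\sum_i\mathbf{1}\{x_i\ne y_i\}$;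 $d_\alpha(x,y)=\sum_i\alpha_i\mathbf{1}\{x_i\ne y_i\}$, $d_\alpha(x,A)=\min_{y\in A}d_\alpha(x,y)$, $d_T(x,A)=\sup\{d_\alpha(x,A):\alpha\in[0,\infty)^n,|\alpha|\le1\}$. *)

(* Defs.v *)
From HB Require Import structures.
From mathcomp Require Import all_boot all_order all_algebra.
From mathcomp Require Import all_classical all_reals.
From mathcomp Require Import exp.
Set Implicit Arguments. Unset Strict Implicit. Unset Printing Implicit Defensive.
Import Order.TTheory GRing.Theory Num.Theory.
Local Open Scope ring_scope.
Local Open Scope classical_set_scope.

Notation cube n := {ffun 'I_n -> bool}.

Section Defs.
Variables (R : realType) (n : nat).
Implicit Types (pi : cube n -> R) (L : cube n -> cube n -> R) (f g : cube n -> R).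

Definition is_prob pi := (forall x, 0 <= pi x) /\ \sum_x pi x = 1.

Definition is_generator L :=
  (forall x y, x != y -> 0 <= L x y) /\ (forall x, \sum_y L x y = 0).

Definition reversible pi L := forall x y, pi x * L x y = pi y * L y x.

Definition genapp L g (x : cube n) : R := \sum_y L x y * g y.

Definition expect pi g : R := \sum_x pi x * g x.

Definition dirichlet pi L f g : R := - \sum_x pi x * f x * genapp L g x.

Definition Ent pi f : R :=
  expect pi (fun x => f x * ln (f x)) - expect pi f * ln (expect pi f).

Definition mlsi_const pi L : R :=
  sup [set c : R | forall f : cube n -> R, (forall x, 0 < f x) ->
        (exists x y, f x != f y) ->
        c * Ent pi f <= dirichlet pi L f (fun x => ln (f x))].

Definition flip (x : cube n) (i : 'I_n) : cube n :=
  [ffun k => if k == i then ~~ x k else x k].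

Definition swap (x : cube n) (i j : 'I_n) : cube n :=
  [ffun k => if k == i then x j else if k == j then x i else x k].

Definition flip_swap L :=
  forall x y, x != y -> 0 < L x y ->
    (exists i, y = flip x i) \/ (exists i j, x i != x j /\ y = swap x i j).

Definition R_stable pi L (Rc : R) :=
  0 < mlsi_const pi L /\
  forall x, 0 < pi x -> forall i : 'I_n,
    \sum_(y : cube n | y i != x i) L x y <= Rc * mlsi_const pi L.

Definition Gamma_plus L g (x : cube n) : R :=
  \sum_y (Num.max (g x - g y) 0) ^+ 2 * L x y.

Definition d_H (x y : cube n) : nat := \sum_i (x i != y i).

Definition d_alpha (a : 'I_n -> R) (x y : cube n) : R :=
  \sum_i a i * (x i != y i)%:R.

Definition d_alpha_set (a : 'I_n -> R) (x : cube n) (A : {set cube n}) : R :=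
  inf [set d_alpha a x y | y in [set y | y \in A]].

Definition d_T (x : cube n) (A : {set cube n}) : R :=
  sup [set d_alpha_set a x A | a in
        [set a : 'I_n -> R | (forall i, 0 <= a i) /\
                             Num.sqrt (\sum_i a i ^+ 2) <= 1]].
End Defs.
Arguments d_T {R n} x A.

(* Main.v *)
Require Import Defs.
From HB Require Import structures.
From mathcomp Require Import all_boot all_order all_algebra.
From mathcomp Require Import all_classical all_reals.
From mathcomp Require Import ring lra.
Import Order.TTheory GRing.Theory Num.Theory.
Local Open Scope ring_scope.

Section H.

Local Open Scope classical_set_scope.
Variables (R : realType) (n : nat).
Implicit Types (a : 'I_n -> R) (x y z : cube n) (A : {set cube n}).

Lemma lt3 {a b c : R} : a <= b -> b <= c -> a <= c.
Proof. exact: le_trans. Qed.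

Definition adm a := (forall i, 0 <= a i) /\ \sum_i a i ^+ 2 <= 1.

Lemma admE a : (forall i, 0 <= a i) /\ Num.sqrt (\sum_i a i ^+ 2) <= 1 <-> adm a.
Proof.
have e : forall s : R, 0 <= s -> (Num.sqrt s <= 1) = (s <= 1).
  by move=> s hs; rewrite -[X in _ <= X]sqrtr1 ler_sqrt.
rewrite /adm e //; apply: sumr_ge0 => i _; apply: sqr_ge0.
Qed.

Lemma dalpha_ge0 a x y : (forall i, 0 <= a i) -> 0 <= d_alpha a x y.
Proof. by move=> h; apply: sumr_ge0 => i _; rewrite mulr_ge0. Qed.

Lemma dset_le a x {A z} : z \in A -> (forall i, 0 <= a i) ->
  d_alpha_set a x A <= d_alpha a x z.
Proof.
move=> zA h; rewrite /d_alpha_set; apply: ge_inf.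
  by exists 0 => _ [w _ <-]; apply: dalpha_ge0.
by exists z.
Qed.

Lemma dset_ge a x A c : A != finset.set0 ->
  (forall z, z \in A -> c <= d_alpha a x z) -> c <= d_alpha_set a x A.
Proof.
move=> /set0Pn [z zA] h; rewrite /d_alpha_set; apply: lb_le_inf.
  by exists (d_alpha a x z), z.
by move=> _ [w wA <-]; apply: h.
Qed.

Lemma dset_ge0 a x A : A != finset.set0 -> (forall i, 0 <= a i) ->
  0 <= d_alpha_set a x A.
Proof. by move=> hA h; apply: dset_ge => // z _; apply: dalpha_ge0. Qed.

Lemma adm_le1 a i : adm a -> a i <= 1.
Proof.
move=> [h0 h1]; have : a i ^+ 2 <= 1.
  apply: (lt3 _ h1); rewrite (bigD1 i) //= lerDl.
  by apply: sumr_ge0 => j _; apply: sqr_ge0.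
have := h0 i; nra.
Qed.

Definition dTset x A := [set d_alpha_set a x A | a in
        [set a : 'I_n -> R | (forall i, 0 <= a i) /\
                             Num.sqrt (\sum_i a i ^+ 2) <= 1]].

Lemma dTset_ub x A : A != finset.set0 -> ubound (dTset x A) n%:R.
Proof.
move=> /set0Pn [z zA] _ [a /admE ha <-].
apply: (lt3 (dset_le a x zA ha.1)).
rewrite -[n in n%:R]card_ord -sum1_card natr_sum.
apply: ler_sum => i _; have := adm_le1 a i ha; have := ha.1 i.
case: (x i != z i) => /=; nra.
Qed.

Lemma adm0 : adm (fun _ => 0).
Proof. by split=> // ; rewrite big1 // => i _; rewrite expr0n. Qed.

Lemma dTset_ne x A : dTset x A !=set0.
Proof. by exists (d_alpha_set (fun _ => 0) x A), (fun _ => 0) => //; apply/admE/adm0. Qed.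

Lemma dT_ub a x A : A != finset.set0 -> adm a -> d_alpha_set a x A <= d_T x A.
Proof.
move=> hA ha; apply: sup_upper_bound.
  by split; [apply: dTset_ne | exists n%:R; apply: dTset_ub].
by exists a => //; apply/admE.
Qed.

Lemma dT_le x A c : A != finset.set0 ->
  (forall a, adm a -> d_alpha_set a x A <= c) -> d_T x A <= c.
Proof.
move=> hA h; apply: ge_sup; first exact: dTset_ne.
by move=> _ [a /admE ha <-]; apply: h.
Qed.

Lemma dT_ge0 x A : A != finset.set0 -> (0:R) <= d_T x A.
Proof.
move=> hA; apply: (lt3 _ (dT_ub (fun _ => 0) x A hA adm0)).
by apply: dset_ge0 => //.
Qed.

Lemma dT_adh x A e : A != finset.set0 -> 0 < e ->
  exists a, adm a /\ (d_T x A : R) - e < d_alpha_set a x A.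
Proof.
move=> hA he; have [_ [a /admE ha <-] h] := sup_adherent he
  (conj (dTset_ne x A) (ex_intro _ n%:R (dTset_ub x A hA))).
by exists a.
Qed.


Lemma cs (I : finType) (b : I -> bool) (g : I -> R) :
  (\sum_i (b i)%:R * g i) ^+ 2 <= (\sum_i (b i)%:R) * \sum_i (b i)%:R * g i ^+ 2.
Proof.
set k := \sum_i (b i)%:R; set a := \sum_i (b i)%:R * g i.
set q := \sum_i (b i)%:R * g i ^+ 2.
have E : \sum_i (b i)%:R * (k * g i - a) ^+ 2 = k * (k * q - a ^+ 2).
  rewrite (eq_bigr (fun i => k ^+ 2 * ((b i)%:R * g i ^+ 2) - (2 * k * a) * ((b i)%:R * g i)
        + a ^+ 2 * (b i)%:R)); last by move=> i _; ring.
  rewrite big_split /= sumrB -!mulr_sumr -/k -/a -/q; ring.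
have P : 0 <= k * (k * q - a ^+ 2).
  rewrite -E; apply: sumr_ge0 => i _; apply: mulr_ge0 => //; apply: sqr_ge0.
have k0 : 0 <= k by apply: sumr_ge0.
have [kz|kp] := eqVneq k 0.
  have : forall i, (b i)%:R = 0 :> R.
    by move=> i; apply: (psumr_eq0P (fun j _ => ler0n _ (b j)) kz).
  move=> h; have -> : a = 0 by rewrite /a big1 // => i _; rewrite h mul0r.
  by rewrite kz expr0n /= mul0r.
have kpos : 0 < k by rewrite lt_neqAle eq_sym kp.
nra.
Qed.

Lemma amgm (c T a k s2 : R) : 0 <= c -> 0 <= T -> 0 <= a -> 0 <= k -> 0 <= s2 ->
  a ^+ 2 <= k * s2 -> 2 * c * T * a <= c ^+ 2 * k + s2 * T ^+ 2.
Proof.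
move=> c0 T0 a0 k0 s0 h.
have h1 : (2 * c * T * a) ^+ 2 <= (c ^+ 2 * k + s2 * T ^+ 2) ^+ 2.
  have : 0 <= (c ^+ 2 * k - s2 * T ^+ 2) ^+ 2 by apply: sqr_ge0.
  have : 0 <= c ^+ 2 * T ^+ 2 by apply: mulr_ge0; apply: sqr_ge0.
  nra.
have h2 : 0 <= c ^+ 2 * k + s2 * T ^+ 2.
  by apply: addr_ge0; apply: mulr_ge0 => //; apply: sqr_ge0.
by rewrite -ler_sqr // nnegrE; apply: mulr_ge0 => //; apply: mulr_ge0 => //; apply: mulr_ge0.
Qed.


Lemma scale_le b y A : A != finset.set0 -> (forall i, 0 <= b i) ->
  d_alpha_set b y A <= Num.sqrt (\sum_i b i ^+ 2) * (d_T y A : R).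
Proof.
move=> hA b0; set c := Num.sqrt _.
have s0 : 0 <= \sum_i b i ^+ 2 by apply: sumr_ge0 => i _; apply: sqr_ge0.
have [cz|cp] := eqVneq c 0.
  have bz : forall i, b i = 0.
    move=> i; have : \sum_i b i ^+ 2 = 0 by rewrite -(sqr_sqrtr s0) -/c cz expr0n.
    move/(psumr_eq0P (fun j _ => sqr_ge0 (b j)))/(_ i isT)/eqP.
    by rewrite sqrf_eq0 => /eqP.
  rewrite cz mul0r; move: hA => /set0Pn [z zA].
  apply: (lt3 (dset_le b y zA b0)); rewrite /d_alpha big1 // => i _.
  by rewrite bz mul0r.
have c0 : 0 < c by rewrite lt_neqAle eq_sym cp sqrtr_ge0.
pose a := fun i => b i / c.
have ha : adm a.
  split=> [i|]; first by rewrite /a divr_ge0 // ltW.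
  have -> : \sum_i a i ^+ 2 = (\sum_i b i ^+ 2) / c ^+ 2.
    by rewrite mulr_suml; apply: eq_bigr => i _; rewrite /a expr_div_n.
  by rewrite sqr_sqrtr // divff // gt_eqF // -sqrtr_gt0.
apply: (lt3 _ (ler_wpM2l (ltW c0) (dT_ub a y A hA ha))).
rewrite mulrC -ler_pdivrMr //; apply: dset_ge => // z zA.
rewrite ler_pdivrMr // /d_alpha mulr_suml; apply: (lt3 (dset_le b y zA b0)).
apply: ler_sum => i _.
have cn : c != 0 by rewrite gt_eqF.
rewrite /a [X in _ <= X](_ : _ = b i * (y i != z i)%:R) //; field; exact: cn.
Qed.


Lemma part2 x y A : A != finset.set0 ->
  (d_T x A : R) ^+ 2 - (d_T y A : R) ^+ 2 <= (d_H x y)%:R.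
Proof.
move=> hA; set T : R := d_T y A; set k : R := (d_H x y)%:R.
have T0 : 0 <= T by apply: dT_ge0.
have kE : k = \sum_i (x i != y i)%:R by rewrite /k /d_H natr_sum.
have k0 : 0 <= k by rewrite /k.
have key : forall a, adm a -> d_alpha_set a x A ^+ 2 <= T ^+ 2 + k.
  move=> al [a0 a1].
  pose b := fun i => al i * (x i == y i)%:R.
  have b0 : forall i, 0 <= b i by move=> i; rewrite /b mulr_ge0.
  set D := d_alpha_set al x A.
  set av := \sum_i (x i != y i)%:R * al i.
  set s2 := \sum_i (x i != y i)%:R * al i ^+ 2.
  set c := Num.sqrt (\sum_i b i ^+ 2).
  have D0 : 0 <= D by apply: dset_ge0.
  have av0 : 0 <= av by apply: sumr_ge0 => i _; apply: mulr_ge0.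
  have s0 : 0 <= s2 by apply: sumr_ge0 => i _; apply: mulr_ge0 => //; apply: sqr_ge0.
  have c0 : 0 <= c by apply: sqrtr_ge0.
  have cs2 : c ^+ 2 + s2 <= 1.
    rewrite sqr_sqrtr; last by apply: sumr_ge0 => i _; apply: sqr_ge0.
    rewrite -big_split /=; apply: (lt3 _ a1); apply: ler_sum => i _.
    by rewrite /b; case: (x i == y i) => /=; rewrite ?mulr1 ?mulr0 ?mul1r ?mul0r ?expr0n ?add0r ?addr0.
  have avs : av ^+ 2 <= k * s2 by rewrite kE; apply: cs.
  have Dle : D <= c * T + av.
    have h1 := scale_le b y A hA b0.
    suff : D - av <= d_alpha_set b y A by rewrite -/c -/T in h1; move=> h2; lra.
    apply: dset_ge => // z zA; rewrite lerBlDr.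
    apply: (lt3 (dset_le al x zA a0)).
    rewrite /d_alpha /av -big_split /=; apply: ler_sum => i _.
    rewrite /b; have := a0 i; case: (x i); case: (y i); case: (z i) => /=;
      rewrite ?mulr1 ?mulr0 ?mul1r ?mul0r ?add0r ?addr0; lra.
  have am := @amgm c T av k s2 c0 T0 av0 k0 s0 avs.
  have : D ^+ 2 <= (c * T + av) ^+ 2 by rewrite ler_sqr // nnegrE addr_ge0 // mulr_ge0.
  have : 0 <= T ^+ 2 by apply: sqr_ge0.
  nra.
have hx : d_T x A <= Num.sqrt (T ^+ 2 + k).
  apply: dT_le => // a ha; have h := ler_wsqrtr (key a ha).
  rewrite sqrtr_sqr ger0_norm in h => //.
  by apply: dset_ge0 => //; case: ha.
have S : Num.sqrt (T ^+ 2 + k) ^+ 2 = T ^+ 2 + k.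
  by rewrite sqr_sqrtr // addr_ge0 // sqr_ge0.
have hx0 := dT_ge0 x A hA.
have : d_T x A ^+ 2 <= Num.sqrt (T ^+ 2 + k) ^+ 2.
  by rewrite ler_sqr // nnegrE sqrtr_ge0.
rewrite S; lra.
Qed.


Lemma dalpha_tri a x y z : (forall i, 0 <= a i) ->
  d_alpha a x z <= d_alpha a y z + d_alpha a x y.
Proof.
move=> a0; rewrite /d_alpha -big_split /=; apply: ler_sum => i _.
have := a0 i; case: (x i); case: (y i); case: (z i) => /=;
  rewrite ?mulr1 ?mulr0 ?mul1r ?mul0r ?add0r ?addr0; lra.
Qed.

Lemma dalpha_xx a x : d_alpha a x x = 0.
Proof. by rewrite /d_alpha big1 // => i _; rewrite eqxx mulr0. Qed.

Lemma sum_ind (i : 'I_n) : \sum_k ((k == i)%:R : R) = 1.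
Proof.
by rewrite (bigD1 i) //= eqxx big1 ?addr0 // => k /negbTE ->.
Qed.

Lemma fs_dH (L : cube n -> cube n -> R) x y : flip_swap L -> x != y -> 0 < L x y ->
  \sum_k ((x k != y k)%:R : R) <= 2.
Proof.
move=> fs xy Lp; case: (fs x y xy Lp) => [[i ->]|[i [j [xij ->]]]].
  apply: (@lt3 _ 1); last by lra.
  rewrite -[X in _ <= X](sum_ind i); apply: ler_sum => k _; rewrite /flip ffunE.
  by case: (k == i); case: (x k).
apply: (lt3 (b := \sum_k ((k == i)%:R + (k == j)%:R))).
  apply: ler_sum => k _; rewrite /swap ffunE.
  have hb : forall b : bool, (b%:R : R) <= 1 by case => /=; rewrite ?mulr1n ?mulr0n; lra.
  case: (k == i) => /=.
    by apply: (lt3 (hb _)); rewrite lerDl ler0n.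
  case: (k == j) => /=; first by rewrite add0r hb.
  by rewrite eqxx /=; rewrite ?mulr0n ?addr0.
by rewrite big_split /= !sum_ind.
Qed.


Lemma term_bound (L : cube n -> cube n -> R) A x y al (eps : R) :
  A != finset.set0 -> is_generator L -> flip_swap L -> adm al ->
  0 < eps -> eps <= 1 -> (d_T x A : R) - eps < d_alpha_set al x A -> y != x ->
  Num.max ((d_T x A : R) ^+ 2 - (d_T y A : R) ^+ 2) 0 ^+ 2 * L x y <=
  4 * (d_T x A : R) ^+ 2 * L x y *
     (2 * d_alpha (fun i => al i ^+ 2) x y + 5 * eps).
Proof.
move=> hA [Lg _] fs [a0 a1] e0 e1 hal yx.
set d : R := d_T x A; set dy : R := d_T y A.
have {}hal : d - eps < d_alpha_set al x A := hal.
set q := d_alpha (fun i => al i ^+ 2) x y.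
have q0 : 0 <= q by apply: dalpha_ge0 => i; apply: sqr_ge0.
have d0 : 0 <= d by apply: dT_ge0.
have dy0 : 0 <= dy by apply: dT_ge0.
have L0 : 0 <= L x y by apply: Lg; rewrite eq_sym.
have [Lz|Lnz] := eqVneq (L x y) 0.
  by rewrite Lz !mulr0 mul0r.
have Lp : 0 < L x y by rewrite lt_neqAle eq_sym Lnz.
have xy : x != y by rewrite eq_sym.
have dh := fs_dH L x y fs xy Lp.
set s := d_alpha al x y.
have s0 : 0 <= s by apply: dalpha_ge0.
have sq : s ^+ 2 <= 2 * q.
  have h := @cs _ (fun k => x k != y k) al.
  have -> : s = \sum_i (x i != y i)%:R * al i.
    by apply: eq_bigr => i _; rewrite mulrC.
  have hq : q = \sum_i (x i != y i)%:R * al i ^+ 2.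
    by apply: eq_bigr => i _; rewrite mulrC.
  apply: (lt3 h); rewrite -hq; exact: ler_wpM2r.
have q1 : q <= 1.
  apply: (lt3 _ a1); apply: ler_sum => i _.
  have := sqr_ge0 (al i); case: (x i != y i) => /=; rewrite ?mulr1n ?mulr0n; lra.
have hdy : d - eps - s < dy.
  have := dT_ub al y A hA (conj a0 a1); rewrite -/dy => hh.
  have : d_alpha_set al x A - s <= d_alpha_set al y A.
    apply: dset_ge => // z zA; rewrite lerBlDr.
    apply: (lt3 (dset_le al x zA a0)); exact: dalpha_tri.
  lra.
have RHS0 : 0 <= 4 * d ^+ 2 * L x y * (2 * q + 5 * eps).
  apply: mulr_ge0; last lra.
  by apply: mulr_ge0 => //; apply: mulr_ge0 => //; apply: sqr_ge0.
have [hle|hlt] := leP (d ^+ 2 - dy ^+ 2) 0.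
  by rewrite expr0n /= mul0r.

have ddy : dy < d by rewrite -(ltr_pXn2r (n:=2)) // ?nnegrE; lra.
have m1 : d ^+ 2 - dy ^+ 2 <= 2 * d * (eps + s) by nra.
have m2 : (d ^+ 2 - dy ^+ 2) ^+ 2 <= (2 * d * (eps + s)) ^+ 2.
  rewrite ler_sqr ?nnegrE //; first lra.
  by apply: mulr_ge0; [apply: mulr_ge0 | lra].
have s2 : s <= 2 by nra.
have m3 : (eps + s) ^+ 2 <= 2 * q + 5 * eps by nra.
have m4 : (d ^+ 2 - dy ^+ 2) ^+ 2 <= 4 * d ^+ 2 * (2 * q + 5 * eps).
  apply: (lt3 m2); rewrite exprMn [in X in X <= _]exprMn -mulrA.
  have -> : (2:R) ^+ 2 = 4 by rewrite expr2; lra.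
  have hd2 := sqr_ge0 d.
  have := ler_wpM2l hd2 m3; lra.
rewrite -mulrA [L x y * _]mulrC mulrA; apply: ler_wpM2r => //.
Qed.


Lemma sumLq (pi : cube n -> R) (L : cube n -> cube n -> R) Rc x al :
  R_stable pi L Rc -> 0 < pi x -> adm al -> 0 <= Rc ->
  \sum_y L x y * d_alpha (fun i => al i ^+ 2) x y <= Rc * mlsi_const pi L.
Proof.
move=> [rho0 st] pix [a0 a1] Rc0.
have E : \sum_y L x y * d_alpha (fun i => al i ^+ 2) x y =
   \sum_i al i ^+ 2 * \sum_(y : cube n | y i != x i) L x y.
  rewrite (eq_bigr (fun y => \sum_i al i ^+ 2 * (L x y * (x i != y i)%:R))); last first.
    by move=> y _; rewrite /d_alpha mulr_sumr; apply: eq_bigr => i _; ring.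
  rewrite exchange_big /=; apply: eq_bigr => i _; rewrite -mulr_sumr; congr (_ * _).
  rewrite [RHS]big_mkcond /=; apply: eq_bigr => y _; rewrite eq_sym.
  by case: (y i != x i); rewrite ?mulr1n ?mulr0n ?mulr1 ?mulr0.
rewrite E; apply: (lt3 (b := \sum_i al i ^+ 2 * (Rc * mlsi_const pi L))).
  apply: ler_sum => i _; apply: ler_wpM2l; [exact: sqr_ge0 | exact: st].
rewrite -mulr_suml; have h : 0 <= Rc * mlsi_const pi L by rewrite mulr_ge0 // ltW.
nra.
Qed.


Lemma part1 (pi : cube n -> R) (L : cube n -> cube n -> R) Rc A x :
  is_generator L -> flip_swap L -> 0 <= Rc -> R_stable pi L Rc ->
  A != finset.set0 -> 0 < pi x ->
  Gamma_plus L (fun z => d_T z A ^+ 2) x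
       <= 8 * Rc * mlsi_const pi L * d_T x A ^+ 2.
Proof.
move=> gen fs Rc0 st hA pix.
set rho := mlsi_const pi L; set d : R := d_T x A.
have d0 : 0 <= d by apply: dT_ge0.
set C := \sum_(y | y != x) L x y.
have C0 : 0 <= C by apply: sumr_ge0 => y yx; apply: gen.1; rewrite eq_sym.
set K := 20 * d ^+ 2 * C.
have K0 : 0 <= K by apply: mulr_ge0 => //; apply: mulr_ge0 => //; apply: sqr_ge0.
apply/ler_addgt0Pr => e e0.
pose eps := Num.min 1 (e / (K + 1)).
have eK : e / (K + 1) > 0 by apply: divr_gt0 => //; lra.
have ep : 0 < eps by rewrite /eps lt_min ltr01 eK.
have e1 : eps <= 1 by rewrite /eps ge_min lexx.
have eKe : eps * K <= e.
  have : eps <= e / (K + 1) by rewrite /eps ge_min lexx orbT.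
  rewrite ler_pdivlMr; last lra.
  nra.
have [al [ha hal]] := dT_adh x A eps hA ep.
have rho0 : 0 < rho by case: st.
have S := sumLq pi L Rc x al st pix ha Rc0.
rewrite /Gamma_plus (bigD1 x) //= subrr maxxx expr0n /= mul0r add0r.
set q := fun y => d_alpha (fun i => al i ^+ 2) x y.
apply: (lt3 (b := \sum_(y | y != x) 4 * d ^+ 2 * L x y * (2 * q y + 5 * eps))).
  apply: ler_sum => y yx; exact: term_bound.
have E : \sum_(y | y != x) 4 * d ^+ 2 * L x y * (2 * q y + 5 * eps) =
   8 * d ^+ 2 * (\sum_(y | y != x) L x y * q y) + eps * K.
  rewrite /K /C mulr_sumr mulr_sumr mulr_sumr -big_split /=.
  by apply: eq_bigr => y _; ring.
have E2 : \sum_y L x y * q y = \sum_(y | y != x) L x y * q y.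
  by rewrite (bigD1 x) //= /q dalpha_xx mulr0 add0r.
rewrite E -E2.
have : 8 * d ^+ 2 * (\sum_y L x y * q y) <= 8 * d ^+ 2 * (Rc * rho).
  apply: ler_wpM2l => //; apply: mulr_ge0 => //; apply: sqr_ge0.
lra.
Qed.

End H.

Theorem lemma6p2 (R : realType) (n : nat) (pi : cube n -> R)
  (L : cube n -> cube n -> R) (Rc : R) :
  is_prob pi -> is_generator L -> reversible pi L -> flip_swap L ->
  0 <= Rc -> R_stable pi L Rc ->
  (forall (A : {set cube n}) (x : cube n), A != finset.set0 -> 0 < pi x ->
     Gamma_plus L (fun z => d_T z A ^+ 2) x
       <= 8 * Rc * mlsi_const pi L * d_T x A ^+ 2) /\
  (forall (x y : cube n) (A : {set cube n}), A != finset.set0 ->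
     (d_T x A : R) ^+ 2 - (d_T y A : R) ^+ 2 <= (d_H x y)%:R).
Proof.
move=> _ gen _ fs Rc0 st; split.
  by move=> A x hA pix; apply: part1.
by move=> x y A hA; apply: part2.
Qed.
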